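(* Let $S\in\{0,1\}^{m\times n}$. Then (1) the identity $I\in\mathbb R^{m\times m}$ is $S$-consistent; (2) for any invertible $S$-consistent $C,C'\in\mathbb R^{m\times m}$, the product $CC'$ is $S$-consistent; (3) for any invertible $S$-consistent $C$, the inverse $C^{-1}$ is $S$-consistent. Hence the set of invertible $S$-consistent $m\times m$ matrices is a group under matrix multiplication.
   Context: $S$-consistency: for $S\in\{0,1\}^{m\times n}$, $C\in\mathbb R^{m\times m}$ is $S$-consistent iff for all $i,j$: $[\mathbb 1-S(\mathbb 1-S)^\top]^+_{i,j}=0\Rightarrow C_{i,j}=0$, where $[\cdot]^+=\max\{0,\cdot\}$ entrywise and $\mathbb 1$ is an all-ones matrix of appropriate size. *)

(* Defs.v *)
From mathcomp Require Import all_boot all_order all_algebra.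
From mathcomp Require Import reals.
Set Implicit Arguments. Unset Strict Implicit. Unset Printing Implicit Defensive.
Import Order.TTheory GRing.Theory Num.Theory.
Local Open Scope ring_scope.

(* A 0/1 matrix S ∈ {0,1}^{m×n} is represented as a boolean matrix;
   entries are cast into R via nat_of_bool and %:R. *)

Definition consMx (R : realType) (m n : nat) (S : 'M[bool]_(m, n)) : 'M[R]_(m, m) :=
  const_mx 1 - (map_mx (fun b : bool => (b : nat)%:R) S)
               *m (const_mx 1 - map_mx (fun b : bool => (b : nat)%:R) S)^T.

Definition posPart (R : realType) (m : nat) (A : 'M[R]_(m, m)) : 'M[R]_(m, m) :=
  map_mx (fun x => Num.max 0 x) A.

Definition S_consistent (R : realType) (m n : nat) (S : 'M[bool]_(m, n))
    (C : 'M[R]_(m, m)) : Prop :=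
  forall i j : 'I_m, posPart (consMx R S) i j = 0 -> C i j = 0.

(* Main.v *)
Require Import Defs.
From mathcomp Require Import all_boot all_order all_algebra.
From mathcomp Require Import reals.
Import Order.TTheory GRing.Theory Num.Theory.
Local Open Scope ring_scope.

Lemma consE (R : realType) m n (S : 'M[bool]_(m, n)) i j :
  consMx R S i j = 1 - (#|[pred k | S i k && ~~ S j k]|)%:R.
Proof.
rewrite /consMx !mxE; congr (_ - _).
rewrite -sum1_card natr_sum [RHS]big_mkcond /=; apply: eq_bigr => k _.
rewrite !mxE /= inE.
by case: (S i k); case: (S j k) => /=; rewrite ?subrr ?mulr0 ?mul0r ?subr0 ?mulr1.
Qed.

Lemma posE (R : realType) m n (S : 'M[bool]_(m, n)) i j :
  (posPart (consMx R S) i j == 0) = [exists k, S i k && ~~ S j k].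
Proof.
rewrite /posPart mxE consE.
case: (boolP [exists k, _]) => [/existsP[k Hk]|/existsPn H].
- have : (0 < #|[pred k | S i k && ~~ S j k]|)%N by apply/card_gt0P; exists k.
  case: #|_| => // N _. apply/eqP; apply/max_idPl.
  by rewrite subr_le0 -natr1 lerDr.
- have -> : #|[pred k | S i k && ~~ S j k]| = 0%N.
    by apply/eqP; rewrite -?pred0E; apply/pred0P => k /=; apply/negbTE/H.
  by rewrite subr0 (max_idPr _) ?ler01 // oner_eq0.
Qed.

Lemma consP (R : realType) m n (S : 'M[bool]_(m, n)) (C : 'M[R]_m) :
  S_consistent S C <-> forall i j, [exists k, S i k && ~~ S j k] -> C i j = 0.
Proof.
split=> H i j; [rewrite -(posE R) => /eqP; exact: H | move=> /eqP; rewrite posE; exact: H].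
Qed.

Lemma cons_trans m n (S : 'M[bool]_(m, n)) i k j :
  [exists x, S i x && ~~ S j x] ->
  [exists x, S i x && ~~ S k x] \/ [exists x, S k x && ~~ S j x].
Proof.
move=> /existsP[x /andP[Hi Hj]]; case Hk: (S k x).
- by right; apply/existsP; exists x; rewrite Hk Hj.
- by left; apply/existsP; exists x; rewrite Hi Hk.
Qed.

Section Cl.
Variables (R : realType) (m n : nat) (S : 'M[bool]_(m, n)).
Local Notation P := (@S_consistent R m n S).

Lemma P1 : P 1%:M.
Proof.
apply/consP => i j /existsP[x /andP[Hi Hj]]; rewrite mxE.
case E: (_ == _); last by []. move/eqP: E => e.
by subst; rewrite Hi in Hj.
Qed.

Lemma P0 : P 0.
Proof. by apply/consP => i j _; rewrite mxE. Qed.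

Lemma PD A B : P A -> P B -> P (A + B).
Proof. move=> /consP HA /consP HB; apply/consP => i j H; by rewrite mxE HA // HB // addr0. Qed.

Lemma PZ a A : P A -> P (a *: A).
Proof. move=> /consP HA; apply/consP => i j H; by rewrite mxE HA // mulr0. Qed.

Lemma PM A B : P A -> P B -> P (A *m B).
Proof.
move=> /consP HA /consP HB; apply/consP => i j H; rewrite mxE big1 // => k _.
by case: (@cons_trans _ _ S i k j H) => [/HA -> | /HB ->]; rewrite ?mul0r ?mulr0.
Qed.
End Cl.

Lemma Phorner (R : realType) k n (S : 'M[bool]_(k.+1, n)) (C : 'M[R]_k.+1) :
  S_consistent S C -> forall p, S_consistent S (horner_mx C p).
Proof.
move=> HC; elim/poly_ind => [|p c IH].
  by rewrite rmorph0; apply: P0.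
rewrite rmorphD rmorphM /= horner_mx_X horner_mx_C -mulmxE.
apply: PD; first exact: PM.
by rewrite -scalemx1; apply: PZ; apply: P1.
Qed.

Theorem mainTheorem5 (R : realType) (m n : nat) (S : 'M[bool]_(m, n)) :
  [/\ S_consistent S (1%:M : 'M[R]_m),
      (forall C C' : 'M[R]_m, C \in unitmx -> C' \in unitmx ->
         S_consistent S C -> S_consistent S C' -> S_consistent S (C *m C'))
    & (forall C : 'M[R]_m, C \in unitmx ->
         S_consistent S C -> S_consistent S (invmx C))].
Proof.
split; [exact: P1 | by move=> C C' _ _; apply: PM |].
case: m S => [|k] S C Cu HC; first by move=> [].
set p := char_poly C.
have /factor_theorem [q Hq] : root (p - (p.[0])%:P) 0.
  by rewrite /root hornerD hornerN hornerC subrr.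
have Hp : horner_mx C p = 0 by apply: Cayley_Hamilton.
have E : horner_mx C q *m C = - (p.[0]) *: 1%:M.
  have : horner_mx C (p - (p.[0])%:P) = - (p.[0]) *: 1%:M.
    by rewrite rmorphB /= Hp horner_mx_C sub0r scalemx1 raddfN.
  by move=> <-; rewrite Hq rmorphM rmorphB /= horner_mx_X horner_mx_C raddf0 subr0 -mulmxE.
have p0 : p.[0] != 0.
  by rewrite horner_coef0 /p char_poly_det mulf_neq0 ?signr_eq0 // -unitfE -unitmxE.
have -> : invmx C = (- (p.[0])^-1) *: horner_mx C q.
  have H1 : (- (p.[0])^-1) *: horner_mx C q *m C = 1%:M.
    by rewrite -scalemxAl E scalerA mulrN mulNr opprK mulVf // scale1r.
  by rewrite -[invmx C]mul1mx -H1 -mulmxA mulmxV // mulmx1.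
by apply: PZ; apply: Phorner.
Qed.
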